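(* Assume the setting in the context, with a decomposition of $\mathcal X$ over $A$, a cost function $g\in\mathcal G_s$, a fixed $\alpha\in(0,1)$, and assume moreover that $A$ is invertible. Then the following are equivalent: (a) $\mathcal R(B)=\bigoplus_{i\in\mathcal I}\big[\mathcal R(B)\cap\mathcal X_i\big]$; (b) $\{(A,B|_{\mathcal E_i},g,T)\}_{i\in\mathcal I}$ is a decomposition of $(A,B,g,T)$ for every integer $T>0$; (c) $\{(A,B|_{\mathcal E_i},g,\alpha)\}_{i\in\mathcal I}$ is a decomposition of $(A,B,g,\alpha)$.
   Context: Let $\mathcal F$ be a field and $\mathcal X,\mathcal U$ finite-dimensional vector spaces over $\mathcal F$. Let $A:\mathcal X\to\mathcal X$ and $B:\mathcal U\to\mathcal X$ be linear maps with $B$ injective; $\mathcal R(B)$ is the range of $B$. Consider the system $x_{t+1}=Ax_t+Bu_t$ and a cost $g:\mathcal X\to\mathbb R_{\ge 0}$ with $g(x)=0\iff x=0$. Standing assumption: all minima appearing below are attained. Finite-horizon problem $(A,B,g,T)$ ($T>0$ integer): policies $\pi(x_0)=(\pi_t(x_0))_{t=0}^{T-1}\in\mathcal U^T$, cost $J(x_0,\pi)=\sum_{t=0}^T g(x_t)$ with $x_{t+1}=Ax_t+B\pi_t(x_0)$. Infinite-horizon problem $(A,B,g,\alpha)$ ($\alpha\in(0,1)$): policies $\pi(x_0)\in\mathcal U^{\mathbb Z_+}$, cost $J(x_0,\pi)=\sum_{t\ge0}\alpha^tg(x_t)$. In both, $J^*(x_0)=\min_\pi J(x_0,\pi)$ and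 a minimizing policy is optimal at $x_0$. In the infinite-horizon case $J^*$ satisfies $J^*(x)=g(x)+\alpha\min_{u}J^*(Ax+Bu)$. A decomposition of $\mathcal X$ over $A$ is a direct sum $\mathcal X=\mathcal X_1\oplus\cdots\oplus\mathcal X_r$ with $r>1$ and $A\mathcal X_i\subseteq\mathcal X_i$, $i\in\mathcal I=\{1,\dots,r\}$; $\rho_i:\mathcal X\to\mathcal X_i$ is the projection along the other summands. $\mathcal G_s$ is the set of $h:\mathcal X\to\mathbb R_{\ge0}$ with $h(x)=\sum_i h(\rho_i(x))$ for all $x$. $\mathcal E_i=\{u\in\mathcal U:Bu\in\mathcal X_i\}$. Subproblems $(A,B|_{\mathcal E_i},g,T)$ and $(A,B|_{\mathcal E_i},g,\alpha)$: the same problems for the system $x_{i,t+1}=Ax_{i,t}+B\bar u_{i,t}$ with states in $\mathcal X_i$ and inputs in $\mathcal E_i$; optimal costs $\bar J_i^*$, optimal policies $\bar\pi_i^*$. Definition 1: the family of subproblems is a decomposition of the original problem if for every $x\in\mathcal X$: $J^*(x)=\sum_i\bar J_i^*(\rho_i(x))$, and for every choice of optimal policies $\bar\pi_i^*(\rho_i(x))$ there exists an optimal policy $\pi^*(x)$ of the original problem with $\pi^*(x)=\sum_i\bar\pi_i^*(\rho_i(x))$ (componentwise sum). *)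

(* Defs.v *)
From Stdlib Require Import Reals ClassicalEpsilon.
From HB Require Import structures.
From mathcomp Require Import all_boot all_order all_algebra.
Set Implicit Arguments. Unset Strict Implicit. Unset Printing Implicit Defensive.
Import GRing.Theory.
Local Open Scope ring_scope.

Inductive ereal := EFin of R | EInf.

Definition eadd (a b : ereal) : ereal :=
  match a, b with EFin x, EFin y => EFin (Rplus x y) | _, _ => EInf end.

Definition ele (a b : ereal) : Prop :=
  match a, b with
  | EFin x, EFin y => Rle x y
  | _, EInf => True
  | EInf, EFin _ => False
  end.

(* value of a series with (nonnegative) terms f : convergent limit, or +oo *)
Definition esum (f : nat -> R) : ereal :=
  match excluded_middle_informative
          (exists l, Un_cv (fun n => sum_f_R0 f n) l) with
  | left H => EFin (proj1_sig (constructive_indefinite_description _ H))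
  | right _ => EInf
  end.

Definition is_min (T : Type) (le : T -> T -> Prop) (S : T -> Prop) (v : T) :=
  S v /\ forall w, S w -> le v w.

(* "min S": the minimum of S (meaningful when it is attained) *)
Definition min_of (T : Type) (d : T) (le : T -> T -> Prop) (S : T -> Prop) : T :=
  epsilon (inhabits d) (is_min le S).

Section Control.
Variables (F : fieldType) (X U : vectType F).

Fixpoint traj (A : 'End(X)) (B : 'Hom(U, X)) (x0 : X) (u : nat -> U) (t : nat)
  : X :=
  match t with
  | 0 => x0
  | t'.+1 => A (traj A B x0 u t') + B (u t')
  end.

(* admissible input sequences: constraint P on inputs (P = True for the
   original problem, P = E_i for the i-th subproblem) *)
Definition fadm (P : U -> Prop) (T : nat) (u : nat -> U) :=
  forall t, (t < T)%N -> P (u t).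
Definition iadm (P : U -> Prop) (u : nat -> U) := forall t, P (u t).

Definition fcost A B (g : X -> R) (T : nat) x0 u : R :=
  sum_f_R0 (fun t => g (traj A B x0 u t)) T.
Definition icost A B (g : X -> R) (alpha : R) x0 u : ereal :=
  esum (fun t => Rmult (pow alpha t) (g (traj A B x0 u t))).

Definition fopt A B g (P : U -> Prop) T x0 (u : nat -> U) :=
  fadm P T u /\ forall v, fadm P T v -> Rle (fcost A B g T x0 u) (fcost A B g T x0 v).
Definition iopt A B g alpha (P : U -> Prop) x0 (u : nat -> U) :=
  iadm P u /\ forall v, iadm P v -> ele (icost A B g alpha x0 u) (icost A B g alpha x0 v).

Definition fJstar A B g (P : U -> Prop) T x0 : R :=
  min_of R0 Rle (fun c => exists u, fadm P T u /\ c = fcost A B g T x0 u).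
Definition iJstar A B g alpha (P : U -> Prop) x0 : ereal :=
  min_of EInf ele (fun c => exists u, iadm P u /\ c = icost A B g alpha x0 u).

Definition is_decomp (A : 'End(X)) (r : nat) (Xs : 'I_r -> {vspace X}) :=
  [/\ (1 < r)%N, directv (\sum_(i < r) Xs i)%VS,
      (\sum_(i < r) Xs i)%VS = fullv & forall i, (A @: Xs i <= Xs i)%VS].

(* rho_i : projection onto X_i along the other summands *)
Definition rho (r : nat) (Xs : 'I_r -> {vspace X}) (i : 'I_r) (x : X) : X :=
  epsilon (inhabits 0) (fun y => exists f : 'I_r -> X,
     [/\ forall j, f j \in Xs j, x = \sum_(j < r) f j & y = f i]).

Definition Ein (B : 'Hom(U, X)) (r : nat) (Xs : 'I_r -> {vspace X}) (i : 'I_r)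
  : U -> Prop := fun u => B u \in Xs i.

Definition in_Gs (r : nat) (Xs : 'I_r -> {vspace X}) (h : X -> R) :=
  (forall x, Rle R0 (h x)) /\
  forall x, h x = \big[Rplus/R0]_(i < r) h (rho Xs i (x)).

Definition noU : U -> Prop := fun _ => True.

Definition fdecomposition A B g r (Xs : 'I_r -> {vspace X}) T :=
  forall x,
    fJstar A B g noU T x = \big[Rplus/R0]_(i < r) fJstar A B g (Ein B Xs i) T (rho Xs i x)
    /\ forall ubar : 'I_r -> nat -> U,
         (forall i, fopt A B g (Ein B Xs i) T (rho Xs i x) (ubar i)) ->
         fopt A B g noU T x (fun t => \sum_(i < r) ubar i t).

Definition idecomposition A B g alpha r (Xs : 'I_r -> {vspace X}) :=
  forall x,
    iJstar A B g alpha noU x = \big[eadd/EFin R0]_(i < r) iJstar A B g alpha (Ein B Xs i) (rho Xs i x)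
    /\ forall ubar : 'I_r -> nat -> U,
         (forall i, iopt A B g alpha (Ein B Xs i) (rho Xs i x) (ubar i)) ->
         iopt A B g alpha noU x (fun t => \sum_(i < r) ubar i t).

End Control.

(* Main.v *)
Require Import Defs.
From Stdlib Require Import Reals ClassicalEpsilon FunctionalExtensionality Lra.
From HB Require Import structures.
From mathcomp Require Import all_boot all_order all_algebra.
Set Implicit Arguments. Unset Strict Implicit. Unset Printing Implicit Defensive.
Import GRing.Theory.
HB.instance Definition _ := Monoid.isComLaw.Build R R0 Rplus
  (fun a b c => esym (Rplus_assoc a b c)) Rplus_comm Rplus_0_l.

Lemma eadd_assoc : associative eadd.
Proof. by move=> [a|] [b|] [c|] //=; rewrite Rplus_assoc. Qed.
Lemma eadd_comm : commutative eadd.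
Proof. by move=> [a|] [b|] //=; rewrite Rplus_comm. Qed.
Lemma eadd_0l : left_id (EFin R0) eadd.
Proof. by move=> [a|] //=; rewrite Rplus_0_l. Qed.
HB.instance Definition _ := Monoid.isComLaw.Build ereal (EFin R0) eadd
  eadd_assoc eadd_comm eadd_0l.

Section Reals.
Local Open Scope R_scope.

Lemma sumf_big (n : nat) (f : 'I_n -> nat -> R) T :
  sum_f_R0 (fun t => \big[Rplus/R0]_(i < n) f i t) T =
  \big[Rplus/R0]_(i < n) sum_f_R0 (f i) T.
Proof.
elim: T => [|T IH] /=; first by [].
by rewrite IH big_split.
Qed.

Lemma big_Rle (n : nat) (f h : 'I_n -> R) :
  (forall i, f i <= h i) -> \big[Rplus/R0]_(i < n) f i <= \big[Rplus/R0]_(i < n) h i.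
Proof.
move=> H; apply: (big_ind2 (fun a b => a <= b)); [lra| |by move=> i _].
by move=> *; apply: Rplus_le_compat.
Qed.

Lemma big_Rlt (n : nat) (f h : 'I_n -> R) i0 :
  (forall i, f i <= h i) -> f i0 < h i0 ->
  \big[Rplus/R0]_(i < n) f i < \big[Rplus/R0]_(i < n) h i.
Proof.
move=> H H0; rewrite (bigD1 i0) //= [X in _ < X](bigD1 i0) //=.
apply: Rplus_lt_le_compat => //.
apply: (big_ind2 (fun a b => a <= b)); [lra| |by move=> i _].
by move=> *; apply: Rplus_le_compat.
Qed.

Lemma big_Rge0 (n : nat) (f : 'I_n -> R) :
  (forall i, 0 <= f i) -> 0 <= \big[Rplus/R0]_(i < n) f i.
Proof.
move=> H; apply: (big_ind (fun a => 0 <= a)); [lra| |by move=> i _].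
by move=> *; lra.
Qed.

Definition psum (f : nat -> R) := fun n => sum_f_R0 f n.

Lemma psum_ge0 f : (forall t, 0 <= f t) -> forall n, 0 <= sum_f_R0 f n.
Proof. move=> H; elim => [|n IH] /=; [apply H| have := H n.+1; lra]. Qed.

Lemma psum_grow f : (forall t, 0 <= f t) -> Un_growing (fun n => sum_f_R0 f n).
Proof. move=> H n /=; have := H n.+1; lra. Qed.

Lemma esum_cases f :
  (exists l, Un_cv (fun n => sum_f_R0 f n) l /\ esum f = EFin l) \/
  ((~ exists l, Un_cv (fun n => sum_f_R0 f n) l) /\ esum f = EInf).
Proof.
rewrite /esum; case: excluded_middle_informative => H; last by right.
left; case: (constructive_indefinite_description _ H) => l Hl /=; by exists l.
Qed.

Lemma esum_fin f l : Un_cv (fun n => sum_f_R0 f n) l -> esum f = EFin l.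
Proof.
move=> Hl; case: (esum_cases f) => [[l' [Hl' ->]]|[Hn _]]; last by case: Hn; exists l.
by rewrite (UL_sequence _ _ _ Hl' Hl).
Qed.

Lemma esum_lb f n : (forall t, 0 <= f t) -> ele (EFin (sum_f_R0 f n)) (esum f).
Proof.
move=> H; case: (esum_cases f) => [[l [Hl ->]]|[_ ->]] //=.
exact: (growing_ineq _ _ (psum_grow H) Hl).
Qed.

Lemma dom_cv f h : (forall t, 0 <= f t) -> (forall n, sum_f_R0 f n <= sum_f_R0 h n) ->
  (exists l, Un_cv (fun n => sum_f_R0 h n) l) -> Un_growing (fun n => sum_f_R0 h n) ->
  exists l, Un_cv (fun n => sum_f_R0 f n) l.
Proof.
move=> Hf Hd [l Hl] Hg.
have Hb : bound (EUn (fun n => sum_f_R0 f n)).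
  exists l => x [n ->]; apply: Rle_trans (Hd n) _; exact: (growing_ineq _ _ Hg Hl).
case: (growing_cv _ (psum_grow Hf) Hb) => l' Hl'; by exists l'.
Qed.

Lemma esum_add f h : (forall t, 0 <= f t) -> (forall t, 0 <= h t) ->
  esum (fun t => f t + h t) = eadd (esum f) (esum h).
Proof.
move=> Hf Hh.
have Hfh : forall t, 0 <= f t + h t by move=> t; have := Hf t; have := Hh t; lra.
have Es : forall n, sum_f_R0 (fun t => f t + h t) n = sum_f_R0 f n + sum_f_R0 h n.
  by move=> n; rewrite sum_plus.
case: (esum_cases f) => [[lf [Hlf ->]]|[Hnf ->]].
  case: (esum_cases h) => [[lh [Hlh ->]]|[Hnh ->]].
    apply: esum_fin => /=.
    have -> : (fun n => sum_f_R0 (fun t => f t + h t) n) =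
      (fun n => sum_f_R0 f n + sum_f_R0 h n) by apply: functional_extensionality.
    exact: CV_plus.
  case: (esum_cases (fun t => f t + h t)) => [[l [Hl _]]|[_ ->]] //.
  case: Hnh; apply: (dom_cv Hh) (psum_grow Hfh); last by exists l.
  move=> n; rewrite Es; have := psum_ge0 Hf n; lra.
case: (esum_cases (fun t => f t + h t)) => [[l [Hl _]]|[_ ->]] //.
case: Hnf; apply: (dom_cv Hf) (psum_grow Hfh); last by exists l.
move=> n; rewrite Es; have := psum_ge0 Hh n; lra.
Qed.

Lemma esum_const f c : (forall n, sum_f_R0 f n = c) -> esum f = EFin c.
Proof.
move=> H; apply: esum_fin => e He; exists 0%nat => n _.
by rewrite H /R_dist Rminus_diag Rabs_R0.
Qed.

Lemma esum_big (n : nat) (f : 'I_n -> nat -> R) : (forall i t, 0 <= f i t) ->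
  esum (fun t => \big[Rplus/R0]_(i < n) f i t) = \big[eadd/EFin R0]_(i < n) esum (f i).
Proof.
move=> H; rewrite /index_enum; elim: (Finite.enum _) => [|a s IH].
  rewrite big_nil; apply: esum_const => m.
  by elim: m => [|m IHm] /=; rewrite big_nil // IHm; lra.
rewrite big_cons -IH -esum_add //.
  by congr esum; apply: functional_extensionality => t; rewrite big_cons.
by move=> t; apply: (big_ind (fun a => 0 <= a)) => //; [lra| move=> *; lra].
Qed.

Lemma min_of_eq (T : Type) (d : T) (le : T -> T -> Prop) S v :
  (forall a b, le a b -> le b a -> a = b) -> is_min le S v -> min_of d le S = v.
Proof.
move=> Ha Hv; rewrite /min_of.
have ex : exists w, is_min le S w by exists v.
case: (epsilon_spec (inhabits d) (is_min le S) ex) => H1 H2.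
case: Hv => Hv1 Hv2.
apply: Ha; [exact: H2 | exact: Hv2].
Qed.

Lemma ele_antisym a b : ele a b -> ele b a -> a = b.
Proof. by case: a => [x|]; case: b => [y|] //= H1 H2; rewrite (Rle_antisym _ _ H1 H2). Qed.

Lemma ele_trans a b c : ele a b -> ele b c -> ele a c.
Proof. case: a => [x|]; case: b => [y|]; case: c => [z|] //=; lra. Qed.

Lemma eadd_mono a b c d : ele a c -> ele b d -> ele (eadd a b) (eadd c d).
Proof. case: a => [x|]; case: b => [y|]; case: c => [z|]; case: d => [w|] //=; lra. Qed.

Lemma big_ele (n : nat) (f h : 'I_n -> ereal) :
  (forall i, ele (f i) (h i)) -> ele (\big[eadd/EFin R0]_(i < n) f i) (\big[eadd/EFin R0]_(i < n) h i).
Proof.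
move=> H; apply: (big_ind2 ele); [simpl; lra| |by move=> i _].
by move=> *; apply: eadd_mono.
Qed.

Lemma big_ele_fin (n : nat) (f : 'I_n -> R) (h : 'I_n -> ereal) :
  (forall i, ele (EFin (f i)) (h i)) -> ele (EFin (\big[Rplus/R0]_(i < n) f i)) (\big[eadd/EFin R0]_(i < n) h i).
Proof.
move=> H; apply: (big_ind2 (fun a b => ele (EFin a) b)); [simpl; lra| |by move=> i _].
by move=> x1 x2 y1 y2 H1 H2; apply: (eadd_mono H1 H2).
Qed.
End Reals.
Section Dec.
Local Open Scope ring_scope.
Variables (F : fieldType) (X : vectType F) (r : nat) (Xs : 'I_r -> {vspace X}).
Hypothesis dir : directv (\sum_(i < r) Xs i).
Hypothesis full : (\sum_(i < r) Xs i)%VS = fullv.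

Lemma uniq_dec (f f' : 'I_r -> X) : (forall j, f j \in Xs j) -> (forall j, f' j \in Xs j) ->
  \sum_(j < r) f j = \sum_(j < r) f' j -> forall i, f i = f' i.
Proof.
move=> Hf Hf' Hs i.
move/directv_sum_unique: dir => H.
have := H f f' (fun j _ => Hf j) (fun j _ => Hf' j).
rewrite Hs eqxx => /esym/forall_inP/(_ i isT)/eqP; done.
Qed.

Lemma dec_ex (x : X) : exists f : 'I_r -> X, (forall j, f j \in Xs j) /\ x = \sum_(j < r) f j.
Proof.
have : x \in (\sum_(i < r) Xs i)%VS by rewrite full memvf.
by case/memv_sumP => f Hf ->; exists f; split => // j; apply: Hf.
Qed.

Lemma rho_spec (f : 'I_r -> X) x i : (forall j, f j \in Xs j) -> x = \sum_(j < r) f j ->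
  rho Xs i x = f i.
Proof.
move=> Hf Hx; rewrite /rho.
set P := fun y => _.
have ex : exists y, P y by exists (f i), f.
case: (epsilon_spec (inhabits 0) P ex) => f' [Hf' Hx' ->].
by apply: (uniq_dec Hf' Hf); rewrite -Hx' -Hx.
Qed.

Lemma rho_mem i x : rho Xs i x \in Xs i.
Proof. by case: (dec_ex x) => f [Hf Hx]; rewrite (rho_spec i Hf Hx). Qed.

Lemma rho_sum x : x = \sum_(i < r) rho Xs i x.
Proof.
case: (dec_ex x) => f [Hf Hx].
by rewrite {1}Hx; apply: eq_bigr => i _; rewrite (rho_spec i Hf Hx).
Qed.

Lemma rho_id i x : x \in Xs i -> rho Xs i x = x.
Proof.
move=> Hx.
pose f j := if j == i then x else 0.
have Hf : forall j, f j \in Xs j by move=> j; rewrite /f; case: eqP => [->|]; rewrite ?mem0v.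
have := rho_spec i Hf; rewrite /f eqxx; apply.
by rewrite (bigD1 i) //= eqxx big1 ?addr0 // => j /negPf ->.
Qed.
End Dec.

Lemma fopt_min (F : fieldType) (X U : vectType F) A B g (P : U -> Prop) T (x : X) u :
  fopt A B g P T x u -> fJstar A B g P T x = fcost A B g T x u.
Proof.
case=> Ha Hm; apply: min_of_eq; first exact: Rle_antisym.
split; first by exists u.
by move=> w [v [Hv ->]]; apply: Hm.
Qed.

Lemma iopt_min (F : fieldType) (X U : vectType F) A B g alpha (P : U -> Prop) (x : X) u :
  iopt A B g alpha P x u -> iJstar A B g alpha P x = icost A B g alpha x u.
Proof.
case=> Ha Hm; apply: min_of_eq; first exact: ele_antisym.
split; first by exists u.
by move=> w [v [Hv ->]]; apply: Hm.
Qed.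

Section Ctrl.
Local Open Scope ring_scope.
Variables (F : fieldType) (X U : vectType F) (A : 'End(X)) (B : 'Hom(U, X)) (r : nat)
  (Xs : 'I_r -> {vspace X}).
Hypothesis dir : directv (\sum_(i < r) Xs i).
Hypothesis full : (\sum_(i < r) Xs i)%VS = fullv.
Hypothesis HA : forall i, (A @: Xs i <= Xs i)%VS.

Lemma traj_lin (x0s : 'I_r -> X) (ubar : 'I_r -> nat -> U) t :
  traj A B (\sum_(i < r) x0s i) (fun s => \sum_(i < r) ubar i s) t =
  \sum_(i < r) traj A B (x0s i) (ubar i) t.
Proof. by elim: t => [|t IH] //=; rewrite IH !linear_sum -big_split. Qed.

Lemma traj_mem i y w t : y \in Xs i -> (forall s, (s < t)%N -> B (w s) \in Xs i) ->
  traj A B y w t \in Xs i.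
Proof.
move=> Hy; elim: t => [|t IH] Hw //=.
rewrite memvD //; last exact: Hw.
apply: (subvP (HA i)); apply: memv_img; apply: IH => s Hs; apply: Hw; exact: ltnW.
Qed.

Lemma rho_traj x ubar t : (forall i, traj A B (rho Xs i x) (ubar i) t \in Xs i) ->
  forall i, rho Xs i (traj A B x (fun s => \sum_(j < r) ubar j s) t) =
            traj A B (rho Xs i x) (ubar i) t.
Proof.
move=> H i; apply: (rho_spec dir (f := fun j => traj A B (rho Xs j x) (ubar j) t)) => //.
by rewrite -traj_lin -(rho_sum dir full).
Qed.

Lemma rhoA i x : rho Xs i (A x) = A (rho Xs i x).
Proof.
apply: (rho_spec dir (f := fun j => A (rho Xs j x))).
  by move=> j; apply: (subvP (HA j)); apply: memv_img; apply: rho_mem.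
by rewrite -linear_sum -(rho_sum dir full).
Qed.

Lemma rhoN i x : rho Xs i (- x) = - rho Xs i x.
Proof.
apply: (rho_spec dir (f := fun j => - rho Xs j x)).
  by move=> j; rewrite memvN; apply: rho_mem.
by rewrite sumrN -(rho_sum dir full).
Qed.

Variables (g : X -> R) (alpha : R).
Hypothesis Hg : in_Gs Xs g.

Lemma g_traj x ubar t : (forall i, traj A B (rho Xs i x) (ubar i) t \in Xs i) ->
  g (traj A B x (fun s => \sum_(j < r) ubar j s) t) =
  \big[Rplus/R0]_(i < r) g (traj A B (rho Xs i x) (ubar i) t).
Proof.
move=> H; rewrite (proj2 Hg); apply: eq_bigr => i _; by rewrite rho_traj.
Qed.

Lemma fcost_dec T x ubar : (forall i, fadm (Ein B Xs i) T (ubar i)) ->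
  fcost A B g T x (fun s => \sum_(j < r) ubar j s) =
  \big[Rplus/R0]_(i < r) fcost A B g T (rho Xs i x) (ubar i).
Proof.
move=> Had; rewrite /fcost -sumf_big; apply: PartSum.sum_eq => t /leP Ht.
apply: g_traj => i; apply: traj_mem; first exact: rho_mem.
move=> s Hs; apply: Had; exact: leq_trans Hs Ht.
Qed.

Hypothesis Hal : Rle R0 alpha.

Lemma icost_dec x ubar : (forall i, iadm (Ein B Xs i) (ubar i)) ->
  icost A B g alpha x (fun s => \sum_(j < r) ubar j s) =
  \big[eadd/EFin R0]_(i < r) icost A B g alpha (rho Xs i x) (ubar i).
Proof.
move=> Had; rewrite /icost -esum_big.
  congr esum; apply: functional_extensionality => t.
  rewrite g_traj; last first.
    move=> i; apply: traj_mem; first exact: rho_mem.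
    by move=> s _; apply: Had.
  by rewrite (big_morph (fun y => Rmult (pow alpha t) y) (Rmult_plus_distr_l _) (Rmult_0_r _)).
move=> i t; apply: Rmult_le_pos; [exact: pow_le | exact: (proj1 Hg)].
Qed.

Hypothesis Hinj : injective B.

Lemma a_inputs (Ha : limg B = (\sum_(i < r) (limg B :&: Xs i))%VS) (w : nat -> U) :
  exists wbar : 'I_r -> nat -> U, (forall i t, B (wbar i t) \in Xs i) /\
    w = fun t => \sum_(i < r) wbar i t.
Proof.
have Hd : forall u : U, exists v : 'I_r -> U, (forall i, B (v i) \in Xs i) /\ u = \sum_(i < r) v i.
  move=> u; have : B u \in limg B by apply: memv_img; apply: memvf.
  rewrite {1}Ha => /memv_sumP [ws Hws Hb].
  exists (fun i => (B^-1)%VF (ws i)).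
  have Hw i : ws i \in limg B /\ ws i \in Xs i by apply/memv_capP/Hws.
  have E i : B ((B^-1)%VF (ws i)) = ws i by apply: limg_lfunVK; case: (Hw i).
  split; first by move=> i /=; have [_ H] := Hw i; rewrite -(E i) in H; exact: H.
  apply: Hinj; rewrite linear_sum Hb; apply: eq_bigr => i _; exact/esym/E.
exists (fun i t => proj1_sig (constructive_indefinite_description _ (Hd (w t))) i).
split.
  move=> i t; case: (constructive_indefinite_description _ _) => v [Hv _] /=; exact: Hv.
apply: functional_extensionality => t.
by case: (constructive_indefinite_description _ _) => v [_ Hv] /=.
Qed.

Lemma a_to_b (Ha : limg B = (\sum_(i < r) (limg B :&: Xs i))%VS) T
  (Hsub : forall i x, x \in Xs i -> exists u, fopt A B g (Ein B Xs i) T x u) :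
  fdecomposition A B g Xs T.
Proof.
move=> x.
have Hopt : forall ubar, (forall i, fopt A B g (Ein B Xs i) T (rho Xs i x) (ubar i)) ->
    fopt A B g (noU (U:=U)) T x (fun t => \sum_(i < r) ubar i t).
  move=> ubar Hu; split; first by [].
  move=> v _; case: (a_inputs Ha v) => vbar [Hv ->].
  rewrite fcost_dec; last by move=> i; case: (Hu i).
  rewrite fcost_dec; last by move=> i t _; apply: Hv.
  apply: big_Rle => i; case: (Hu i) => _; apply; move=> t _; exact: Hv.
split => //.
have Hs i : exists u, fopt A B g (Ein B Xs i) T (rho Xs i x) u.
  by apply: Hsub; apply: (rho_mem dir full).
pose ubar i := proj1_sig (constructive_indefinite_description _ (Hs i)).
have Hu i : fopt A B g (Ein B Xs i) T (rho Xs i x) (ubar i).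
  exact: (proj2_sig (constructive_indefinite_description _ (Hs i))).
rewrite (fopt_min (Hopt ubar Hu)) fcost_dec; last by move=> i; case: (Hu i).
by apply: eq_bigr => i _; rewrite (fopt_min (Hu i)).
Qed.

Lemma a_to_c (Ha : limg B = (\sum_(i < r) (limg B :&: Xs i))%VS)
  (Hsub : forall i x, x \in Xs i -> exists u, iopt A B g alpha (Ein B Xs i) x u) :
  idecomposition A B g alpha Xs.
Proof.
move=> x.
have Hopt : forall ubar, (forall i, iopt A B g alpha (Ein B Xs i) (rho Xs i x) (ubar i)) ->
    iopt A B g alpha (noU (U:=U)) x (fun t => \sum_(i < r) ubar i t).
  move=> ubar Hu; split; first by [].
  move=> v _; case: (a_inputs Ha v) => vbar [Hv ->].
  rewrite icost_dec; last by move=> i; case: (Hu i).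
  rewrite icost_dec; last by move=> i t; apply: Hv.
  apply: big_ele => i; case: (Hu i) => _; apply; move=> t; exact: Hv.
split => //.
have Hs i : exists u, iopt A B g alpha (Ein B Xs i) (rho Xs i x) u.
  by apply: Hsub; apply: (rho_mem dir full).
pose ubar i := proj1_sig (constructive_indefinite_description _ (Hs i)).
have Hu i : iopt A B g alpha (Ein B Xs i) (rho Xs i x) (ubar i).
  exact: (proj2_sig (constructive_indefinite_description _ (Hs i))).
rewrite (iopt_min (Hopt ubar Hu)) icost_dec; last by move=> i; case: (Hu i).
by apply: eq_bigr => i _; rewrite (iopt_min (Hu i)).
Qed.

Lemma rho_condA : (forall u i, rho Xs i (B u) \in limg B) ->
  directv (\sum_(i < r) (limg B :&: Xs i)) /\ limg B = (\sum_(i < r) (limg B :&: Xs i))%VS.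
Proof.
move=> H; split.
  apply/directv_sum_independent => us Hus Hsum i _.
  move/directv_sum_independent: dir => D; apply: (D us) => // j _.
  by case/memv_capP: (Hus j isT).
apply/eqP; rewrite eqEsubv; apply/andP; split.
  apply/subvP => b /memv_imgP [u _ ->].
  rewrite [B u](rho_sum dir full); apply: memv_sumr => i _.
  by rewrite memv_cap H (rho_mem dir full).
by apply/subv_sumP => i _; apply: capvSl.
Qed.

Hypothesis HAb : bijective A.
Hypothesis Hg0 : forall x, g x = R0 <-> x = 0.

Lemma gpos y : y != 0 -> Rlt R0 (g y).
Proof.
move=> Hy; case: (Rle_lt_or_eq_dec _ _ (proj1 Hg y)) => // E.
by move/eqP: Hy; case; apply/(proj1 (Hg0 y)).
Qed.

Lemma g0 : g 0 = R0.
Proof. by apply/(proj2 (Hg0 0)). Qed.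

Lemma cex u0 i0 : rho Xs i0 (B u0) \notin limg B ->
  exists x0 u, (forall t, traj A B x0 u t.+1 = 0) /\
               (forall v, A (rho Xs i0 x0) + B v != 0).
Proof.
move=> Hn; case: HAb => Ainv H1 H2.
exists (Ainv (- B u0)), (fun t => if t is 0 then u0 else 0); split.
  elim => [|t IH] /=; first by rewrite H2 addNr.
  by move: IH => /= ->; rewrite !linear0 addr0.
move=> v; rewrite -rhoA H2 rhoN; apply/negP => /eqP E.
move/negP: Hn; apply; have -> : rho Xs i0 (B u0) = B v.
  by apply/eqP; rewrite eq_sym -subr_eq0 addrC E.
by apply: memv_img; apply: memvf.
Qed.

Lemma b_to_a (Hb : fdecomposition A B g Xs 1)
  (Hsub : forall i x, x \in Xs i -> exists u, fopt A B g (Ein B Xs i) 1 x u)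
  (Hfu : forall x, exists u, fopt A B g (noU (U:=U)) 1 x u) :
  directv (\sum_(i < r) (limg B :&: Xs i)) /\ limg B = (\sum_(i < r) (limg B :&: Xs i))%VS.
Proof.
apply: rho_condA => u0 i0.
case: (boolP (rho Xs i0 (B u0) \in limg B)) => // Hn; exfalso.
case: (cex Hn) => x0 [u [Hz Hnz]].
have [Heq _] := Hb x0.
have Hs i : exists u, fopt A B g (Ein B Xs i) 1 (rho Xs i x0) u.
  by apply: Hsub; apply: (rho_mem dir full).
pose ubar i := proj1_sig (constructive_indefinite_description _ (Hs i)).
have Hu i : fopt A B g (Ein B Xs i) 1 (rho Xs i x0) (ubar i).
  exact: (proj2_sig (constructive_indefinite_description _ (Hs i))).
case: (Hfu x0) => us Hus.
have H1 : Rle (fJstar A B g (noU (U:=U)) 1 x0) (g x0).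
  rewrite (fopt_min Hus); apply: Rle_trans; first by apply: (proj2 Hus u).
  by rewrite /fcost /=; move: (Hz 0%N) => /= ->; rewrite g0 Rplus_0_r; apply: Rle_refl.
have H2 : Rlt (\big[Rplus/R0]_(i < r) g (rho Xs i x0))
              (\big[Rplus/R0]_(i < r) fJstar A B g (Ein B Xs i) 1 (rho Xs i x0)).
  apply: (big_Rlt (i0 := i0)) => [i|].
    rewrite (fopt_min (Hu i)) /fcost /=.
    by have := proj1 Hg (A (rho Xs i x0) + B (ubar i 0%N)); lra.
  rewrite (fopt_min (Hu i0)) /fcost /=.
  by have := gpos (Hnz (ubar i0 0%N)); lra.
rewrite -Heq -(proj2 Hg) in H2; lra.
Qed.

Hypothesis Hal0 : Rlt R0 alpha.

Lemma c_to_a (Hc : idecomposition A B g alpha Xs)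
  (Hsub : forall i x, x \in Xs i -> exists u, iopt A B g alpha (Ein B Xs i) x u)
  (Hfu : forall x, exists u, iopt A B g alpha (noU (U:=U)) x u) :
  directv (\sum_(i < r) (limg B :&: Xs i)) /\ limg B = (\sum_(i < r) (limg B :&: Xs i))%VS.
Proof.
apply: rho_condA => u0 i0.
case: (boolP (rho Xs i0 (B u0) \in limg B)) => // Hn; exfalso.
case: (cex Hn) => x0 [u [Hz Hnz]].
have [Heq _] := Hc x0.
have Hs i : exists u, iopt A B g alpha (Ein B Xs i) (rho Xs i x0) u.
  by apply: Hsub; apply: (rho_mem dir full).
pose ubar i := proj1_sig (constructive_indefinite_description _ (Hs i)).
have Hu i : iopt A B g alpha (Ein B Xs i) (rho Xs i x0) (ubar i).
  exact: (proj2_sig (constructive_indefinite_description _ (Hs i))).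
case: (Hfu x0) => us Hus.
have H1 : ele (iJstar A B g alpha (noU (U:=U)) x0) (EFin (g x0)).
  rewrite (iopt_min Hus); apply: ele_trans; first by apply: (proj2 Hus u).
  have -> : icost A B g alpha x0 u = EFin (g x0).
    apply: esum_const; elim => [|n IH] /=; first by rewrite Rmult_1_l.
    by rewrite IH; move: (Hz n) => /= ->; rewrite g0 Rmult_0_r Rplus_0_r.
  by simpl; apply: Rle_refl.
pose b i := sum_f_R0 (fun t => Rmult (pow alpha t) (g (traj A B (rho Xs i x0) (ubar i) t))) 1.
have H2 : ele (EFin (\big[Rplus/R0]_(i < r) b i))
              (\big[eadd/EFin R0]_(i < r) iJstar A B g alpha (Ein B Xs i) (rho Xs i x0)).
  apply: big_ele_fin => i; rewrite (iopt_min (Hu i)); apply: esum_lb => t.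
  apply: Rmult_le_pos; [apply: pow_le; lra | exact: (proj1 Hg)].
have H3 : Rlt (\big[Rplus/R0]_(i < r) g (rho Xs i x0)) (\big[Rplus/R0]_(i < r) b i).
  apply: (big_Rlt (i0 := i0)) => [i|]; rewrite /b /=.
    have := proj1 Hg (A (rho Xs i x0) + B (ubar i 0%N)).
    have := Rmult_le_pos _ _ (Rlt_le _ _ Hal0) (proj1 Hg (A (rho Xs i x0) + B (ubar i 0%N))).
    lra.
  have := Rmult_lt_0_compat _ _ Hal0 (gpos (Hnz (ubar i0 0%N))); lra.
rewrite -(proj2 Hg) in H3.
rewrite -Heq in H2; have := ele_trans H2 H1 => /= H4.
exact: (Rlt_not_le _ _ H3 H4).
Qed.

End Ctrl.

Local Open Scope ring_scope.

Theorem theorem2 (F : fieldType) (X U : vectType F)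
  (A : 'End(X)) (B : 'Hom(U, X)) (r : nat) (Xs : 'I_r -> {vspace X})
  (g : X -> R) (alpha : R) :
  injective B ->
  bijective A ->
  is_decomp A Xs ->
  (forall x, g x = R0 <-> x = 0) ->
  in_Gs Xs g ->
  Rlt R0 alpha -> Rlt alpha R1 ->
  (* standing assumption: all minima are attained *)
  (forall T, (0 < T)%N -> forall x, exists u, fopt A B g (noU (U:=U)) T x u) ->
  (forall T, (0 < T)%N -> forall i x, x \in Xs i ->
     exists u, fopt A B g (Ein B Xs i) T x u) ->
  (forall x, exists u, iopt A B g alpha (noU (U:=U)) x u) ->
  (forall i x, x \in Xs i -> exists u, iopt A B g alpha (Ein B Xs i) x u) ->
  [/\ (* (a) <-> (b) *)
      (directv (\sum_(i < r) (limg B :&: Xs i))%VS /\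
       limg B = (\sum_(i < r) (limg B :&: Xs i))%VS)
      <-> (forall T, (0 < T)%N -> fdecomposition A B g Xs T),
      (* (a) <-> (c) *)
      (directv (\sum_(i < r) (limg B :&: Xs i))%VS /\
       limg B = (\sum_(i < r) (limg B :&: Xs i))%VS)
      <-> idecomposition A B g alpha Xs
    & (* (b) <-> (c) *)
      (forall T, (0 < T)%N -> fdecomposition A B g Xs T)
      <-> idecomposition A B g alpha Xs].
Proof.
move=> Hinj HAb [Hr Hdir Hfull HA] Hg0 Hg Ha0 Ha1 Hf Hfs Hi His.
have Hal : Rle R0 alpha by apply: Rlt_le.
have AB : forall Ha : (directv (\sum_(i < r) (limg B :&: Xs i))%VS /\
       limg B = (\sum_(i < r) (limg B :&: Xs i))%VS),
    forall T, (0 < T)%N -> fdecomposition A B g Xs T.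
  by move=> [_ Ha] T HT; apply: (a_to_b Hdir Hfull HA Hg Hinj Ha (Hfs T HT)).
have AC : forall Ha : (directv (\sum_(i < r) (limg B :&: Xs i))%VS /\
       limg B = (\sum_(i < r) (limg B :&: Xs i))%VS),
    idecomposition A B g alpha Xs.
  by move=> [_ Ha]; apply: (a_to_c Hdir Hfull HA Hg Hal Hinj Ha His).
have BA : (forall T, (0 < T)%N -> fdecomposition A B g Xs T) ->
    (directv (\sum_(i < r) (limg B :&: Xs i))%VS /\
       limg B = (\sum_(i < r) (limg B :&: Xs i))%VS).
  by move=> H; apply: (b_to_a Hdir Hfull HA Hg HAb Hg0 (H 1%N isT) (Hfs 1%N isT) (Hf 1%N isT)).
have CA : idecomposition A B g alpha Xs ->
    (directv (\sum_(i < r) (limg B :&: Xs i))%VS /\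
       limg B = (\sum_(i < r) (limg B :&: Xs i))%VS).
  by move=> H; apply: (c_to_a Hdir Hfull HA Hg Hal HAb Hg0 Ha0 H His Hi).
split; split.
- exact: AB.
- exact: BA.
- exact: AC.
- exact: CA.
- by move=> H; apply: AC; apply: BA.
- by move=> H; apply: AB; apply: CA.
Qed.
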